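(* Let $R=\mathbb{Z}$ or $\mathbb{Z}[i]$ with fraction field $K$, let $1\leq k<n$, and let $A_0=(a_1|\dots|a_k)\in R^{n\times k}$ be a $k$-icube of norm $\lambda$. Then (1) the $R$-module $\Lambda=\{w\in R^n: a_j^*w=0 \text{ for } 1\leq j\leq k\}$ is free of rank $n-k$; (2) if $Q$ denotes the restriction of the standard form $(x,y)\mapsto x^*y$ to $\Lambda$ and $\mathrm{disc}(Q)$ the determinant of its Gram matrix with respect to an $R$-basis of $\Lambda$, then $\mathrm{disc}(Q)=\lambda^k/|d_k(A_0)|^2$.
   Context: A $k$-icube of norm $\lambda>0$ in $R^n$ is $(v_1|\dots|v_k)\in R^{n\times k}$ with $v_i^*v_j=\lambda$ if $i=j$ and $0$ otherwise ($v^*$ the conjugate transpose). $d_k(A_0)$ is the $k$-th determinantal divisor: the gcd of the $k\times k$ minors of $A_0$ (defined up to a unit; $|d_k(A_0)|^2$ is well defined). *)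

(* Defs.v *)
(* Both coefficient rings Z and Z[i] are realised as
   subrings of the algebraic complex numbers algC (fraction field inside). *)
From HB Require Import structures.
From mathcomp Require Import all_boot all_order all_algebra all_field.
Set Implicit Arguments. Unset Strict Implicit. Unset Printing Implicit Defensive.
Import Order.TTheory GRing.Theory Num.Theory.
Local Open Scope ring_scope.

Variant Rkind := RZ | RZi.

Definition inR (r : Rkind) (x : algC) : bool :=
  match r with
  | RZ => x \is a Num.int
  | RZi => ('Re x \is a Num.int) && ('Im x \is a Num.int)
  end.

Definition mxR (r : Rkind) m n (A : 'M[algC]_(m, n)) : Prop :=
  forall i j, inR r (A i j).

Definition ctr m n (A : 'M[algC]_(m, n)) : 'M[algC]_(n, m) := (map_mx (fun x : algC => x^*) A)^T.

Definition icube m k (A : 'M[algC]_(m, k)) (lam : algC) : Prop :=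
  0 < lam /\ ctr A *m A = lam%:M.

Definition inLambda (r : Rkind) n k (A : 'M[algC]_(n, k)) (w : 'cV[algC]_n) : Prop :=
  mxR r w /\ ctr A *m w = 0.

(* The columns of B form an R-basis of Lambda (so Lambda is free of rank p). *)
Definition R_basis_of_Lambda (r : Rkind) n k p (A : 'M[algC]_(n, k))
    (B : 'M[algC]_(n, p)) : Prop :=
  [/\ forall j, inLambda r A (col j B),
      (forall c : 'cV[algC]_p, mxR r c -> B *m c = 0 -> c = 0)
    & (forall w, inLambda r A w -> exists2 c : 'cV[algC]_p, mxR r c & w = B *m c)].

Definition dvdR (r : Rkind) (a b : algC) : Prop := exists2 q, inR r q & b = a * q.

Definition is_kminor n k (A : 'M[algC]_(n, k)) (x : algC) : Prop :=
  exists2 f : 'I_k -> 'I_n, injective f & x = \det (rowsub f A).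

Definition is_dk (r : Rkind) n k (A : 'M[algC]_(n, k)) (d : algC) : Prop :=
  [/\ inR r d,
      (forall x, is_kminor A x -> dvdR r d x)
    & (forall e, inR r e -> (forall x, is_kminor A x -> dvdR r e x) -> dvdR r e d)].

(* Main.v *)
Require Import Defs.
From HB Require Import structures.
From mathcomp Require Import all_boot all_order all_fingroup all_algebra all_field ring.
Set Implicit Arguments. Unset Strict Implicit. Unset Printing Implicit Defensive.
Import Order.TTheory GRing.Theory Num.Theory.
Local Open Scope ring_scope.

Section RingFacts.
Variable r : Rkind.

Lemma inR_int x : x \is a Num.int -> inR r x.
Proof.
move=> xi; case: r => //=.
have xr := Rreal_int xi.
by rewrite -[x]addr0 -[0](mulr0 'i) Re_rect ?Im_rect // xi int_num0.
Qed.

Lemma inR0 : inR r 0. Proof. exact: inR_int. Qed.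
Lemma inR1 : inR r 1. Proof. exact: inR_int. Qed.

Lemma inRD x y : inR r x -> inR r y -> inR r (x + y).
Proof.
case: r => /=; first exact: rpredD.
by move=> /andP[? ?] /andP[? ?]; rewrite !raddfD /= !rpredD.
Qed.

Lemma inRN x : inR r x -> inR r (- x).
Proof.
case: r => /=; first by move=> ?; rewrite rpredN.
by move=> /andP[? ?]; rewrite !raddfN /= !rpredN; apply/andP.
Qed.

Lemma inRB x y : inR r x -> inR r y -> inR r (x - y).
Proof. by move=> ? ?; apply: inRD => //; apply: inRN. Qed.

Lemma inRM x y : inR r x -> inR r y -> inR r (x * y).
Proof.
case: r => /=; first exact: rpredM.
move=> /andP[? ?] /andP[? ?]; rewrite ReM ImM.
by rewrite rpredB ?rpredD ?rpredM.
Qed.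

Lemma inR_conj x : inR r x -> inR r x^*.
Proof.
case: r => /=; first by move=> xi; rewrite conj_Creal ?Rreal_int.
by move=> /andP[? ?]; rewrite Re_conj Im_conj rpredN; apply/andP.
Qed.

Lemma inR_nat n : inR r n%:R.
Proof. exact/inR_int/natr_int. Qed.

Lemma inR_sum I (s : seq I) (P : pred I) F :
  (forall i, P i -> inR r (F i)) -> inR r (\sum_(i <- s | P i) F i).
Proof.
move=> H; elim/big_ind: _ => //; [exact: inR0| exact: inRD].
Qed.

Lemma inR_prod I (s : seq I) (P : pred I) F :
  (forall i, P i -> inR r (F i)) -> inR r (\prod_(i <- s | P i) F i).
Proof.
move=> H; elim/big_ind: _ => //; [exact: inR1| exact: inRM].
Qed.

Lemma inR_det n (A : 'M[algC]_n) : mxR r A -> inR r (\det A).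
Proof.
move=> HA; apply: inR_sum => s _; apply: inRM.
  by rewrite -signr_odd; case: (odd _); rewrite ?expr0 ?expr1; [apply: inRN|]; apply: inR1.
by apply: inR_prod => i _; apply: HA.
Qed.

Lemma mxR_mul m n p (A : 'M[algC]_(m, n)) (B : 'M_(n, p)) :
  mxR r A -> mxR r B -> mxR r (A *m B).
Proof. by move=> HA HB i j; rewrite mxE; apply: inR_sum => t _; apply: inRM. Qed.

Lemma mxR_ctr m n (A : 'M[algC]_(m, n)) : mxR r A -> mxR r (ctr A).
Proof. by move=> HA i j; rewrite !mxE; apply: inR_conj. Qed.

Definition nrm (x : algC) := `|x| ^+ 2.

Lemma nrm_nat x : inR r x -> nrm x \is a Num.nat.
Proof.
rewrite /nrm; case: r => /=.
  by move=> xi; rewrite intr_normK // natr_exp_even.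
move=> /andP[? ?]; rewrite normC2_Re_Im.
by rewrite rpredD // natr_exp_even.
Qed.

Lemma nrm_ge1 x : inR r x -> x != 0 -> 1 <= nrm x.
Proof.
move=> xR nz; have /natrP[m Em] := nrm_nat xR.
have : 0 < nrm x by rewrite /nrm exprn_gt0 // normr_gt0.
by rewrite Em ltr0n ler1n.
Qed.

Lemma nrmM x y : nrm (x * y) = nrm x * nrm y.
Proof. by rewrite /nrm normrM exprMn. Qed.

End RingFacts.

Definition rnd (x : algC) : algC := (Num.floor (x + 2^-1))%:~R.

Lemma rnd_int x : rnd x \is a Num.int.
Proof. exact: intr_int. Qed.

Lemma rnd_real x : rnd x \is Num.real.
Proof. exact/Rreal_int/rnd_int. Qed.

Lemma rnd0 : rnd 0 = 0.
Proof.
rewrite /rnd add0r (@floor_def _ _ 0) //.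
by rewrite add0r mulr0z mulr1z invr_ge0 ler0n /= invf_lt1 ?ltr0n ?ltr1n.
Qed.

Lemma rnd_sq x : x \is Num.real -> (x - rnd x) ^+ 2 <= 2^-1 * 2^-1.
Proof.
move=> xr; set h : algC := 2^-1.
have hr : h \is Num.real by rewrite realV realn.
have /andP[l1 l2] := real_floor_itv (realD xr hr).
move: l1 l2; rewrite -/(rnd x) intrD /= -/(rnd x) => l1 l2.
set f := rnd x in l1 l2 *.
have e1 : 0 <= h - (x - f).
  rewrite subr_ge0; move: l2; rewrite -subr_gt0 mulr1z => l2.
  have -> : h = 1 - h by rewrite /h; field.
  apply: ltW; rewrite -subr_gt0.
  by have -> : 1 - h - (x - f) = f + 1 - (x + h) by ring.
have e2 : 0 <= h + (x - f).
  have -> : h + (x - f) = x + h - f by ring.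
  by rewrite subr_ge0.
have := mulr_ge0 e1 e2.
have -> : (h - (x - f)) * (h + (x - f)) = h * h - (x - f) ^+ 2 by ring.
by rewrite subr_ge0.
Qed.

Lemma euclid r a b : inR r a -> inR r b -> b != 0 ->
  exists2 q, inR r q & nrm (a - q * b) < nrm b.
Proof.
move=> aR bR bnz; set z := a / b.
set q := rnd ('Re z) + 'i * rnd ('Im z).
have Req : 'Re q = rnd ('Re z) by rewrite Re_rect // rnd_real.
have Imq : 'Im q = rnd ('Im z) by rewrite Im_rect // rnd_real.
exists q.
  move: aR bR; case: r => /= aR bR.
    have zr : z \is Num.real by rewrite realM ?realV ?Rreal_int.
    rewrite /q (Creal_ImP _ zr) rnd0 mulr0 addr0; exact: rnd_int.
  by rewrite Req Imq !rnd_int.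
have -> : a - q * b = (z - q) * b by rewrite mulrBl /z mulfVK.
rewrite nrmM gtr_pMl; last by rewrite /nrm exprn_gt0 // normr_gt0.
rewrite /nrm normC2_Re_Im !raddfB /= Req Imq.
apply: (le_lt_trans (lerD (rnd_sq (Creal_Re z)) (rnd_sq (Creal_Im z)))).
have -> : (2^-1 * 2^-1 + 2^-1 * 2^-1 : algC) = 2^-1 by field.
by rewrite invf_lt1 ?ltr0n ?ltr1n.
Qed.

Section RowOps.
Variable r : Rkind.

Definition unimod n (V W : 'M[algC]_n) :=
  [/\ mxR r V, mxR r W, V *m W = 1%:M & W *m V = 1%:M].

Lemma mxR1 n : mxR r (1%:M : 'M[algC]_n).
Proof. by move=> i j; rewrite mxE; apply: inR_nat. Qed.

Lemma unimod1 n : unimod (1%:M : 'M_n) 1%:M.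
Proof. by split; rewrite ?mulmx1 //; apply: mxR1. Qed.

Lemma unimod_mul n (V1 W1 V2 W2 : 'M_n) :
  unimod V1 W1 -> unimod V2 W2 -> unimod (V2 *m V1) (W1 *m W2).
Proof.
case=> R1 S1 e1 f1 [R2 S2 e2 f2]; split; try exact: mxR_mul.
  by rewrite mulmxA -(mulmxA V2) e1 mulmx1 e2.
by rewrite mulmxA -(mulmxA W1) f2 mulmx1 f1.
Qed.

Definition ro n k (j : nat) (M M' : 'M[algC]_(n, k)) :=
  exists V W, [/\ unimod V W, M' = V *m M,
     (forall a b : 'I_n, (a < j)%N -> V a b = (a == b)%:R) &
     (forall a b : 'I_n, (j <= a)%N -> (b < j)%N -> V a b = 0)].

Lemma ro_refl n k j (M : 'M_(n, k)) : ro j M M.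
Proof.
exists 1%:M, 1%:M; split; rewrite ?mul1mx //; first exact: unimod1.
  by move=> a b _; rewrite mxE.
move=> a b ja bj; rewrite mxE.
by have /negbTE -> : a != b by apply: contraTneq bj => <-; rewrite -leqNgt.
Qed.

Lemma ro_trans n k j (M1 M2 M3 : 'M_(n, k)) : ro j M1 M2 -> ro j M2 M3 -> ro j M1 M3.
Proof.
case=> V1 [W1 [u1 e1 a1 b1]] [V2 [W2 [u2 e2 a2 b2]]].
exists (V2 *m V1), (W1 *m W2); split.
- exact: unimod_mul.
- by rewrite e2 e1 mulmxA.
- move=> a b aj; rewrite mxE (bigD1 a) //= a2 // eqxx mul1r a1 // big1 ?addr0 //.
  by move=> t /negbTE ta; rewrite a2 // eq_sym ta mul0r.
- move=> a b ja bj; rewrite mxE big1 // => t _.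
  case: (ltnP t j) => tj; first by rewrite b2 ?mul0r.
  by rewrite b1 ?mulr0.
Qed.

Lemma ro_fix n k j (M M' : 'M_(n, k)) : ro j M M' ->
  forall (a : 'I_n) b, (a < j)%N -> M' a b = M a b.
Proof.
case=> V [W [u e a1 b1]] a b aj; rewrite e mxE (bigD1 a) //= a1 // eqxx mul1r big1 ?addr0 //.
by move=> t /negbTE ta; rewrite a1 // eq_sym ta mul0r.
Qed.

Lemma ro_zero n k j (M M' : 'M_(n, k)) b : ro j M M' ->
  (forall i : 'I_n, (j <= i)%N -> M i b = 0) ->
  forall i : 'I_n, (j <= i)%N -> M' i b = 0.
Proof.
case=> V [W [u e a1 b1]] H i ji; rewrite e mxE big1 // => t _.
case: (ltnP t j) => tj; first by rewrite b1 ?mul0r.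
by rewrite H ?mulr0.
Qed.

Lemma ro_mxR n k j (M M' : 'M_(n, k)) : mxR r M -> ro j M M' -> mxR r M'.
Proof. by move=> HM [V [W [[? ? ? ?] -> _ _]]]; apply: mxR_mul. Qed.

Lemma ro_weaken n k j (M M' : 'M_(n, k)) : ro j M M' ->
  exists V W, unimod V W /\ M' = V *m M.
Proof. by case=> V [W [u e _ _]]; exists V, W. Qed.

Lemma delta_mulE n k (i l : 'I_n) (M : 'M[algC]_(n, k)) a b :
  (delta_mx i l *m M) a b = (a == i)%:R * M l b.
Proof.
rewrite mxE (bigD1 l) //= mxE eqxx andbT big1 ?addr0 // => t /negbTE tl.
by rewrite mxE tl andbF mul0r.
Qed.

Definition Eadd n (i l : 'I_n) (c : algC) : 'M[algC]_n := 1%:M + c *: delta_mx i l.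

Lemma EaddM n (i l : 'I_n) c d : i != l -> Eadd i l c *m Eadd i l d = Eadd i l (c + d).
Proof.
move=> il; rewrite /Eadd mulmxDl mulmxDr !mul1mx mulmxDr mulmx1 -scalemxAr -scalemxAl.
rewrite mul_delta_mx_cond eq_sym (negbTE il) mulr0n !scaler0 addr0 scalerDl.
by rewrite -addrA [X in _ + X]addrC addrA.
Qed.

Lemma Eadd0 n (i l : 'I_n) : Eadd i l 0 = 1%:M.
Proof. by rewrite /Eadd scale0r addr0. Qed.

Lemma EaddE n (i l : 'I_n) c a b : Eadd i l c a b = (a == b)%:R + c * ((a == i) && (b == l))%:R.
Proof. by rewrite !mxE. Qed.

Lemma EaddME n k (i l : 'I_n) c (M : 'M[algC]_(n, k)) a b :
  (Eadd i l c *m M) a b = M a b + c * ((a == i)%:R * M l b).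
Proof.
rewrite /Eadd mulmxDl mul1mx -scalemxAl -delta_mulE.
move: (delta_mx i l *m M) => X; by rewrite !mxE.
Qed.

Lemma ro_add n k j (M : 'M_(n, k)) (i l : 'I_n) c :
  (j <= i)%N -> (j <= l)%N -> i != l -> inR r c ->
  exists M', [/\ ro j M M', (forall b, M' i b = M i b + c * M l b)
                & (forall a b, a != i -> M' a b = M a b)].
Proof.
move=> ji jl il cR; exists (Eadd i l c *m M); split.
- exists (Eadd i l c), (Eadd i l (- c)); split => //.
  + split; rewrite ?EaddM ?subrr ?addNr ?Eadd0 //.
      by move=> a b; rewrite EaddE; apply: inRD; [apply: inR_nat | apply: inRM => //; apply: inR_nat].
    by move=> a b; rewrite EaddE; apply: inRD; [apply: inR_nat | apply: inRM; [apply: inRN|apply: inR_nat]].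
  + move=> a b aj; rewrite EaddE.
    have /negbTE -> : a != i by apply: contraTneq aj => ->; rewrite -leqNgt.
    by rewrite mulr0 addr0.
  + move=> a b ja bj; rewrite EaddE.
    have /negbTE -> : a != b by apply: contraTneq bj => <-; rewrite -leqNgt.
    have /negbTE -> : b != l by apply: contraTneq bj => ->; rewrite -leqNgt.
    by rewrite andbF mulr0 addr0.
- move=> b; rewrite EaddME eqxx mul1r //.
- by move=> a b ai; rewrite EaddME (negbTE ai) mul0r mulr0 addr0.
Qed.

Lemma ro_swap n k j (M : 'M_(n, k)) (i l : 'I_n) :
  (j <= i)%N -> (j <= l)%N ->
  exists M', ro j M M' /\ (forall a b, M' a b = M (tperm i l a) b).
Proof.
move=> ji jl; pose P : 'M[algC]_n := perm_mx (tperm i l).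
have PE a b : P a b = (tperm i l a == b)%:R by rewrite !mxE.
exists (P *m M); split; last first.
  by move=> a b; rewrite -row_permE mxE.
exists P, P; split => //.
- have PP : P *m P = 1%:M by rewrite -perm_mxM tperm2 perm_mx1.
  by split => // a b; rewrite PE; apply: inR_nat.
- move=> a b aj; rewrite PE tpermD //.
    by apply: contraTneq aj => <-; rewrite -leqNgt.
  by apply: contraTneq aj => <-; rewrite -leqNgt.
- move=> a b ja bj; rewrite PE.
  suff : (j <= tperm i l a)%N.
    by move=> H; case: eqP => // E; move: H; rewrite E leqNgt bj.
  by case: tpermP.
Qed.

End RowOps.

Section Clear.
Variables (r : Rkind) (n k : nat) (j : 'I_n) (c : 'I_k).

Lemma reduce_all t (M : 'M[algC]_(n, k)) : mxR r M -> M j c != 0 ->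
  exists M', [/\ ro r j M M', mxR r M', M' j c = M j c &
     forall i : 'I_n, (j < i)%N -> (i < t)%N -> nrm (M' i c) < nrm (M j c)].
Proof.
move=> MR nz; elim: t => [|t [M1 [ro1 R1 e1 H1]]].
  by exists M; split => //; apply: ro_refl.
case: (boolP ((j < t) && (t < n))%N) => [/andP[jt tn] | Hn]; last first.
  exists M1; split => // i ji it; apply: H1 => //.
  rewrite ltn_neqAle -ltnS it andbT; apply/eqP => E.
  by move: Hn; rewrite -E ji ltn_ord.
pose i0 := Ordinal tn.
have i0j : i0 != j by apply: contraTneq jt => /(congr1 val) /= ->; rewrite ltnn.
have nz1 : M1 j c != 0 by rewrite e1.
have [q qR Hq] := euclid (R1 i0 c) (R1 j c) nz1.
have [M2 [ro2 E2 F2]] := @ro_add r n k j M1 i0 j (- q) (ltnW jt) (leqnn j) i0j (inRN qR).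
have R2 := ro_mxR R1 ro2.
exists M2; split => //.
- exact: ro_trans ro1 ro2.
- by rewrite F2 1?eq_sym.
- move=> i ji it; case: (eqVneq i i0) => [-> | ii0].
    by rewrite E2 mulNr -e1.
  rewrite F2 //; apply: H1 => //.
  by rewrite ltn_neqAle -ltnS it andbT; apply: contra ii0 => /eqP E; apply/eqP/val_inj.
Qed.

Lemma nat_lt_le (x y : algC) N : x \is a Num.nat -> x < y -> y <= N.+1%:R -> x <= N%:R.
Proof.
move=> /natrP[m ->] xy yN; have := lt_le_trans xy yN.
by rewrite ltr_nat ler_nat ltnS.
Qed.

Lemma clear_aux N (M : 'M[algC]_(n, k)) : mxR r M -> M j c != 0 -> nrm (M j c) <= N%:R ->
  exists M', [/\ ro r j M M', mxR r M' & forall i : 'I_n, (j < i)%N -> M' i c = 0].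
Proof.
elim: N M => [|N IH] M MR nz HN.
  by have := le_trans (nrm_ge1 (MR j c) nz) HN; rewrite ?mulr0n ler10.
have [M1 [ro1 R1 e1 H1]] := reduce_all n MR nz.
case: (boolP [exists i : 'I_n, (j < i)%N && (M1 i c != 0)]) => [/existsP[i0 /andP[ji0 nz0]]|].
  have [M2 [ro2 E2]] := @ro_swap r n k j M1 j i0 (leqnn j) (ltnW ji0).
  have R2 := ro_mxR R1 ro2.
  have e2 : M2 j c = M1 i0 c by rewrite E2 tpermL.
  have nz2 : M2 j c != 0 by rewrite e2.
  have le2 : nrm (M2 j c) <= N%:R.
    rewrite e2; apply: nat_lt_le HN; first exact: nrm_nat (R1 i0 c).
    by rewrite H1.
  have [M3 [ro3 R3 H3]] := IH M2 R2 nz2 le2.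
  by exists M3; split => //; apply: ro_trans (ro_trans ro1 ro2) ro3.
move=> /existsPn H; exists M1; split => // i ji.
by have := H i; rewrite ji /= negbK => /eqP.
Qed.

Lemma clear_col (M : 'M[algC]_(n, k)) : mxR r M ->
  exists M', [/\ ro r j M M', mxR r M' & forall i : 'I_n, (j < i)%N -> M' i c = 0].
Proof.
move=> MR.
have aux (M1 : 'M[algC]_(n, k)) : mxR r M1 -> M1 j c != 0 ->
    exists M', [/\ ro r j M1 M', mxR r M' & forall i : 'I_n, (j < i)%N -> M' i c = 0].
  move=> R1 nz; have /natrP[N EN] := nrm_nat (R1 j c).
  by apply: (clear_aux (N := N)) => //; rewrite EN.
case: (eqVneq (M j c) 0) => [z|nz]; last exact: aux.
case: (boolP [exists i : 'I_n, (j < i)%N && (M i c != 0)]) => [/existsP[i0 /andP[ji0 nz0]]|].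
  have [M2 [ro2 E2]] := @ro_swap r n k j M j i0 (leqnn j) (ltnW ji0).
  have R2 := ro_mxR MR ro2.
  have nz2 : M2 j c != 0 by rewrite E2 tpermL.
  have [M3 [ro3 R3 H3]] := aux M2 R2 nz2.
  by exists M3; split => //; apply: ro_trans ro2 ro3.
move=> /existsPn H; exists M; split => //; first exact: ro_refl.
by move=> i ji; have := H i; rewrite ji /= negbK => /eqP.
Qed.

End Clear.

Lemma echelon r n k (A : 'M[algC]_(n, k)) : (k <= n)%N -> mxR r A ->
  forall t, (t <= k)%N -> exists M', [/\ exists V W, unimod r V W /\ M' = V *m A, mxR r M' &
    forall (i : 'I_n) (c : 'I_k), (c < t)%N -> (c < i)%N -> M' i c = 0].
Proof.
move=> kn AR; elim => [|t IH] tk.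
  by exists A; split => //; exists 1%:M, 1%:M; rewrite mul1mx; split => //; apply: unimod1.
have [M1 [[V1 [W1 [u1 e1]]] R1 H1]] := IH (ltnW tk).
have tn : (t < n)%N by apply: leq_trans kn.
pose j := Ordinal tn; pose c := Ordinal tk.
have [M2 [ro2 R2 H2]] := clear_col j c R1.
have [V2 [W2 [u2 e2]]] := ro_weaken ro2.
exists M2; split => //.
  exists (V2 *m V1), (W1 *m W2); split; first exact: unimod_mul.
  by rewrite e2 e1 mulmxA.
move=> i c' c't c'i; rewrite ltnS leq_eqVlt in c't.
case/orP: c't => [/eqP E | c't].
  have -> : c' = c by apply: val_inj.
  by apply: H2; rewrite /= -E.
case: (ltnP i t) => it.
  by rewrite (ro_fix ro2) //; apply: H1.
apply: (ro_zero ro2) => // i' ji'; apply: H1 => //.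
exact: leq_trans c't ji'.
Qed.

Section CB.
Variables (r : Rkind) (e : algC).
Lemma dvdR0 : dvdR r e 0.
Proof. exists 0. exact: inR0. by rewrite mulr0. Qed.
Lemma dvdRD x y : dvdR r e x -> dvdR r e y -> dvdR r e (x + y).
Proof. move=> [a aR ->] [b bR ->]; exists (a + b). exact: inRD. by rewrite mulrDr. Qed.
Lemma dvdRM c x : inR r c -> dvdR r e x -> dvdR r e (c * x).
Proof. move=> cR [a aR ->]; exists (c * a). exact: inRM. by rewrite mulrCA. Qed.

Lemma det_zero_row p (D : 'M[algC]_p) i0 : row i0 D = 0 -> \det D = 0.
Proof.
move=> H; have := @determinant_multilinear _ _ D D D i0 0 0.
rewrite !mul0r addr0 H scaler0 addr0 => E; exact: E.
Qed.

Definition setrow p q (X : 'M[algC]_(p, q)) a0 (y : 'rV[algC]_q) : 'M[algC]_(p, q) :=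
  \matrix_(a, b) if a == a0 then y 0 b else X a b.

Lemma row_setrow_mul p q s (X : 'M[algC]_(p, q)) a0 y (A : 'M[algC]_(q, s)) :
  row a0 (setrow X a0 y *m A) = y *m A.
Proof.
rewrite row_mul; congr (_ *m _); apply/matrixP => i b.
rewrite !mxE eqxx (ord1 i); reflexivity.
Qed.

Lemma row'_setrow_mul p q s (X : 'M[algC]_(p, q)) a0 y z (A : 'M[algC]_(q, s)) :
  row' a0 (setrow X a0 y *m A) = row' a0 (setrow X a0 z *m A).
Proof.
apply/matrixP => i c; rewrite !mxE; apply: eq_bigr => b _.
rewrite !mxE eq_sym (negbTE (neq_lift a0 i)); reflexivity.
Qed.

Lemma minor_mul n k (A : 'M[algC]_(n, k)) (X : 'M[algC]_(k, n)) :
  (forall x, is_kminor A x -> dvdR r e x) -> mxR r X -> dvdR r e (\det (X *m A)).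
Proof.
move=> HA.
have base : forall g : 'I_k -> 'I_n, dvdR r e (\det (rowsub g A)).
  move=> g; case: (boolP (injectiveb g)) => [/injectiveP ig|/injectivePn [a1 [a2 a12 ga]]].
    by apply: HA; exists g.
  rewrite (determinant_alternate a12); first exact: dvdR0.
  move=> c; rewrite !mxE ga; reflexivity.
have S : forall m (X : 'M[algC]_(k, n)), mxR r X ->
    (forall a : 'I_k, (m <= a)%N -> exists g : 'I_n, forall b, X a b = (g == b)%:R) ->
    dvdR r e (\det (X *m A)).
  elim => [|m IH] X1 XR HX.
    have [g Hg] := fin_all_exists (fun a => HX a (leq0n a)).
    have -> : X1 *m A = rowsub g A.
      apply/matrixP => a c; rewrite !mxE (bigD1 (g a)) //= Hg eqxx mul1r big1 ?addr0.
        reflexivity.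
      by move=> b /negbTE gb; rewrite Hg eq_sym gb mul0r.
    exact: base.
  case: (ltnP m k) => mk; last first.
    apply: IH => // a ma; exfalso; move: (ltn_ord a); rewrite ltnNge (leq_trans mk ma) //.
  pose a0 := Ordinal mk.
  have inner : forall t (x : 'rV[algC]_n), mxR r x -> (forall b : 'I_n, (t <= b)%N -> x 0 b = 0) ->
      dvdR r e (\det (setrow X1 a0 x *m A)).
    elim => [|t IHt] x xR Hx.
      have -> : x = 0 by apply/matrixP => i b; rewrite (ord1 i) Hx // mxE.
      rewrite (@det_zero_row _ _ a0) ?row_setrow_mul ?mul0mx; first exact: dvdR0.
      reflexivity.
    case: (ltnP t n) => tn; last first.
      apply: IHt => // b tb; exfalso; move: (ltn_ord b); rewrite ltnNge (leq_trans tn tb) //.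
    pose b0 := Ordinal tn.
    pose x' := x - x 0 b0 *: delta_mx 0 b0.
    pose Y := setrow X1 a0 (delta_mx 0 b0).
    have E := @determinant_multilinear _ _ (setrow X1 a0 x *m A) (setrow X1 a0 x' *m A) (Y *m A) a0 1 (x 0 b0).
    rewrite E; first last.
    - exact: row'_setrow_mul.
    - exact: row'_setrow_mul.
    - rewrite !row_setrow_mul scale1r /x' mulmxBl -scalemxAl subrK; reflexivity.
    apply: dvdRD.
      rewrite mul1r; apply: IHt.
        move=> i b; rewrite !mxE; apply: inRB (xR i b) (inRM (xR 0 b0) _); apply: inR_nat.
      move=> b tb; rewrite !mxE eqxx /=; case: (eqVneq b b0) => [->|bb0].
        rewrite mulr1 subrr; reflexivity.
      have tb' : (t < b)%N by rewrite ltn_neqAle tb andbT; apply: contra bb0 => /eqP E'; apply/eqP/val_inj.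
      rewrite mulr0 subr0 Hx //.
    apply: dvdRM (xR 0 b0) _; apply: (IH Y).
      move=> a b; rewrite !mxE; case: (a == a0); last exact: XR.
      apply: inR_nat.
    move=> a ma; case: (eqVneq a a0) => [->|aa0].
      exists b0 => b; rewrite !mxE eqxx /= eq_sym; reflexivity.
    have [|g Hg] := HX a.
      rewrite ltn_neqAle ma andbT; apply: contra aa0 => /eqP E'; apply/eqP/val_inj.
      by rewrite /= E'.
    by exists g => b; rewrite !mxE (negbTE aa0).
  have -> : X1 = setrow X1 a0 (row a0 X1).
    apply/matrixP => a b; rewrite !mxE; case: eqVneq => [->|]; reflexivity.
  apply: (inner n) => [a b|b nb]; first by rewrite mxE.
  exfalso; move: (ltn_ord b); rewrite ltnNge nb //.
move=> XR; apply: (S k X XR) => a ka; exfalso; move: (ltn_ord a); rewrite ltnNge ka //.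
Qed.
End CB.

Lemma ctr_mul m n p (X : 'M[algC]_(m, n)) (Y : 'M[algC]_(n, p)) :
  ctr (X *m Y) = ctr Y *m ctr X.
Proof. by rewrite /ctr map_mxM trmx_mul. Qed.

Lemma ctrK m n (X : 'M[algC]_(m, n)) : ctr (ctr X) = X.
Proof. apply/matrixP => i j; rewrite !mxE conjCK; reflexivity. Qed.

Lemma ctr1 n : ctr (1%:M : 'M[algC]_n) = 1%:M.
Proof. by rewrite /ctr map_mx1 trmx1. Qed.

Lemma ctr0 m n : ctr (0 : 'M[algC]_(m, n)) = 0.
Proof. by rewrite /ctr map_mx0 trmx0. Qed.

Lemma ctrD m n (X Y : 'M[algC]_(m, n)) : ctr (X + Y) = ctr X + ctr Y.
Proof. by rewrite /ctr map_mxD linearD. Qed.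

Lemma det_ctr n (X : 'M[algC]_n) : \det (ctr X) = (\det X)^*.
Proof. by rewrite /ctr det_tr det_map_mx. Qed.

Lemma ctr_row_mx m n1 n2 (X : 'M[algC]_(m, n1)) (Y : 'M[algC]_(m, n2)) :
  ctr (row_mx X Y) = col_mx (ctr X) (ctr Y).
Proof. by rewrite /ctr map_row_mx tr_row_mx. Qed.

Lemma unit_nrm r x y : inR r x -> inR r y -> x * y = 1 -> nrm x = 1.
Proof.
move=> xR yR xy.
have := congr1 nrm xy; rewrite nrmM /nrm normr1 expr1n -/(nrm x) -/(nrm y).
have /natrP[a ->] := nrm_nat xR; have /natrP[b ->] := nrm_nat yR.
rewrite -natrM => /eqP; rewrite pnatr_eq1 muln_eq1 => /andP[/eqP -> _]; reflexivity.
Qed.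

Lemma normCK' (x : algC) : x^* * x = nrm x.
Proof. by rewrite /nrm normCKC. Qed.

Lemma gram_row_eq0 n (y : 'rV[algC]_n) : y *m ctr y = 0 -> y = 0.
Proof.
move=> H; have := congr1 (fun M : 'M[algC]_1 => M 0 0) H; rewrite !mxE => S.
have : \sum_(i < n) nrm (y 0 i) = 0.
  rewrite -[RHS]S; apply: eq_bigr => i _; rewrite !mxE /nrm normCK; reflexivity.
move/eqP; rewrite psumr_eq0 => [/allP Hall|i _]; last exact: exprn_ge0.
apply/matrixP => i j; rewrite (ord1 i) mxE.
have := Hall j (mem_index_enum j); rewrite /nrm sqrf_eq0 normr_eq0 => /eqP E; exact: E.
Qed.

Lemma mxR_usub r m1 m2 n (V : 'M[algC]_(m1 + m2, n)) : mxR r V -> mxR r (usubmx V).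
Proof. by move=> H i j; rewrite mxE. Qed.
Lemma mxR_dsub r m1 m2 n (V : 'M[algC]_(m1 + m2, n)) : mxR r V -> mxR r (dsubmx V).
Proof. by move=> H i j; rewrite mxE. Qed.
Lemma mxR_lsub r m n1 n2 (V : 'M[algC]_(m, n1 + n2)) : mxR r V -> mxR r (lsubmx V).
Proof. by move=> H i j; rewrite mxE. Qed.
Lemma mxR_rsub r m n1 n2 (V : 'M[algC]_(m, n1 + n2)) : mxR r V -> mxR r (rsubmx V).
Proof. by move=> H i j; rewrite mxE. Qed.
Lemma mxR_col r m n (X : 'M[algC]_(m, n)) j : mxR r X -> mxR r (col j X).
Proof. by move=> H i j'; rewrite mxE. Qed.
Lemma mxR_B r m n (X Y : 'M[algC]_(m, n)) : mxR r X -> mxR r Y -> mxR r (X - Y).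
Proof. by move=> H1 H2 i j; rewrite !mxE; apply: inRB. Qed.

Lemma rowsub_mul m m' n p (f : 'I_m' -> 'I_m) (X : 'M[algC]_(m, n)) (Y : 'M[algC]_(n, p)) :
  rowsub f (X *m Y) = rowsub f X *m Y.
Proof. by rewrite rowsubE mulmxA -rowsubE. Qed.

Lemma col_mul m n p j (X : 'M[algC]_(m, n)) (Y : 'M[algC]_(n, p)) :
  col j (X *m Y) = X *m col j Y.
Proof. by rewrite !colE mulmxA. Qed.

Lemma basis_change r n k p (A : 'M[algC]_(n, k)) (B0 B : 'M[algC]_(n, p)) :
  R_basis_of_Lambda r A B0 -> R_basis_of_Lambda r A B ->
  exists P Q : 'M[algC]_p, [/\ mxR r P, mxR r Q, B = B0 *m P & P *m Q = 1%:M].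
Proof.
move=> [L0 I0 S0] [L I S].
have mkP (X Y : 'M[algC]_(n, p)) : (forall j, inLambda r A (col j Y)) ->
    (forall w, inLambda r A w -> exists2 c : 'cV[algC]_p, mxR r c & w = X *m c) ->
    exists P : 'M[algC]_p, mxR r P /\ Y = X *m P.
  move=> LY SX.
  have [cf HR Hcf] := fin_all_exists2 (fun j => SX _ (LY j)).
  exists (\matrix_(i, j) cf j i 0); split.
    move=> i j; rewrite mxE; exact: HR.
  apply/matrixP => i j; have /(congr1 (fun M : 'cV[algC]_n => M i 0)) := Hcf j.
  rewrite !mxE => ->; apply: eq_bigr => t _; rewrite mxE; reflexivity.
have [P [PR EP]] := mkP B0 B L S0.
have [Q [QR EQ]] := mkP B B0 L0 S.
exists P, Q; split => //.
have Z : B0 *m (P *m Q - 1%:M) = 0 by rewrite mulmxBr mulmx1 mulmxA -EP -EQ subrr.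
apply/matrixP => i j; apply/eqP; rewrite -subr_eq0; apply/eqP.
have := I0 (col j (P *m Q - 1%:M)) (mxR_col j (mxR_B (mxR_mul PR QR) (@mxR1 r p))).
rewrite -col_mul Z.
have c0 : col j (0 : 'M[algC]_(n, p)) = 0 by apply/matrixP => a b; rewrite !mxE.
move/(_ c0)/(congr1 (fun M : 'cV[algC]_p => M i 0)); rewrite !mxE => E; exact: E.
Qed.

Lemma core r k m (A : 'M[algC]_(k + m, k)) lam : mxR r A -> icube A lam ->
  (exists B : 'M[algC]_(k + m, m), mxR r B /\ R_basis_of_Lambda r A B) /\
  (exists d, is_dk r A d) /\
  (forall (B : 'M[algC]_(k + m, m)) (d : algC),
     R_basis_of_Lambda r A B -> is_dk r A d ->
     \det (ctr B *m B) = lam ^+ k / `|d| ^+ 2).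
Proof.
move=> AR [lam0 HAA].
have [T [[V [W [[VR WR VW WV] ET]]] TR HT]] :=
  @echelon r (k + m) k A (leq_addr m k) AR k (leqnn k).
set V1 := usubmx V; set V2 := dsubmx V; set W1 := lsubmx W; set W2 := rsubmx W.
have EV : V = col_mx V1 V2 by rewrite vsubmxK.
have EW : W = row_mx W1 W2 by rewrite hsubmxK.
have V1R : mxR r V1 by apply: mxR_usub.
have V2R : mxR r V2 by apply: mxR_dsub.
have W1R : mxR r W1 by apply: mxR_lsub.
have W2R : mxR r W2 by apply: mxR_rsub.
set H := V1 *m A.
have HR : mxR r H by apply: mxR_mul.
have V2A : V2 *m A = 0.
  have : dsubmx T = 0.
    apply/matrixP => i c; rewrite !mxE HT //=; exact: leq_trans (ltn_ord c) (leq_addr _ _).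
  by rewrite ET EV mul_col_mx col_mxKd.
have AWH : A = W1 *m H.
  have : A = W *m (V *m A) by rewrite mulmxA WV mul1mx.
  by rewrite EW EV mul_col_mx mul_row_col V2A mulmx0 addr0.
have VW' := VW; rewrite EV EW mul_col_row scalar_mx_block in VW'.
have [e11 e12 e21 e22] := eq_block_mx VW'.
have WV' := WV; rewrite EW EV mul_row_col in WV'.
have dH : \det H != 0.
  apply: contraTneq lam0 => dH0.
  have : \det (ctr A *m A) = 0.
    transitivity (\det (ctr (W1 *m H) *m (W1 *m H))); first by rewrite -AWH.
    by rewrite ctr_mul -mulmxA det_mulmx det_ctr dH0 conjC0 mul0r.
  rewrite HAA det_scalar => /eqP; rewrite expf_eq0 => /andP[_ /eqP ->]; rewrite ltxx; reflexivity.
set B0 := ctr V2.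
have B0R : mxR r B0 by apply: mxR_ctr.
have A_B0 : ctr A *m B0 = 0 by rewrite /B0 -ctr_mul V2A ctr0.
have W2B0 : ctr W2 *m B0 = 1%:M by rewrite /B0 -ctr_mul e22 ctr1.
have basis : R_basis_of_Lambda r A B0.
  split.
  - move=> j; split; first exact: mxR_col.
    rewrite -col_mul A_B0; apply/matrixP => a b; rewrite !mxE; reflexivity.
  - move=> c _ Bc; by rewrite -[c]mul1mx -W2B0 -mulmxA Bc mulmx0.
  - move=> w [wR Aw]; exists (ctr W2 *m w); first exact: mxR_mul (mxR_ctr W2R) wR.
    have W1w : ctr W1 *m w = 0.
      have hu : ctr H \in unitmx by rewrite unitmxE unitfE det_ctr conjC_eq0.
      rewrite -[ctr W1 *m w]mul1mx -(mulVmx hu) -!mulmxA [ctr H *m _]mulmxA -ctr_mul -AWH Aw mulmx0.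
      reflexivity.
    have : w = (ctr V1 *m ctr W1 + ctr V2 *m ctr W2) *m w.
      by rewrite -!ctr_mul -ctrD WV' ctr1 mul1mx.
    by rewrite mulmxDl -!mulmxA W1w mulmx0 add0r.
have minH : forall x, is_kminor A x -> dvdR r (\det H) x.
  move=> x [f _ ->]; exists (\det (rowsub f W1)).
    by apply: inR_det => i j; rewrite mxE.
  by rewrite AWH rowsub_mul det_mulmx mulrC.
have dkH : is_dk r A (\det H).
  split; first exact: inR_det.
    exact: minH.
  move=> e eR He; exact: minor_mul He V1R.
split; first by exists B0.
split; first by exists (\det H).
move=> B d bB [dR dmin dmax].
have [P [Q [PR QR EB PQ]]] := basis_change basis bB.
set G0 := ctr B0 *m B0.
have -> : ctr B *m B = ctr P *m G0 *m P by rewrite EB ctr_mul !mulmxA.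
have nP : (\det P)^* * \det P = 1.
  rewrite normCK'; apply: (@unit_nrm r _ (\det Q)); try exact: inR_det.
  by rewrite -det_mulmx PQ det1.
rewrite !det_mulmx det_ctr mulrAC nP mul1r.
have G0E : G0 = V2 *m B0 by rewrite /G0 /B0 ctrK.
have dG : \det G0 != 0.
  apply/negP => /det0P [v vnz vG].
  have y0 : v *m V2 = 0.
    apply: gram_row_eq0; rewrite ctr_mul -/B0 mulmxA -(mulmxA v) -G0E vG mul0mx.
    reflexivity.
  by move: vnz; rewrite -[v]mulmx1 -e22 mulmxA y0 mul0mx eqxx.
have BA : ctr B0 *m A = 0.
  by have := congr1 (fun X : 'M[algC]_(k, m) => ctr X) A_B0; rewrite /= ctr_mul ctrK ctr0.
set Z := row_mx A B0.
have e1 : \det (ctr Z *m Z) = lam ^+ k * \det G0.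
  by rewrite /Z ctr_row_mx mul_col_row A_B0 HAA BA det_ublock det_scalar.
have e2 : \det V * \det Z = \det H * \det G0.
  by rewrite -det_mulmx {1}EV /Z mul_col_row V2A -G0E det_ublock.
have nV : (\det V)^* * \det V = 1.
  rewrite normCK'; apply: (@unit_nrm r _ (\det W)); try exact: inR_det.
  by rewrite -det_mulmx VW det1.
have cG : (\det G0)^* = \det G0.
  by rewrite -det_ctr /G0 ctr_mul ctrK.
have key : lam ^+ k * \det G0 = nrm (\det H) * \det G0 * \det G0.
  rewrite -e1 det_mulmx det_ctr -[_ * \det Z]mul1r -nV.
  have -> : (\det V)^* * \det V * ((\det Z)^* * \det Z) =
            (\det V * \det Z)^* * (\det V * \det Z) by rewrite rmorphM /=; ring.
  rewrite e2 rmorphM /= cG -normCK'; ring.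
have key2 : lam ^+ k = nrm (\det H) * \det G0.
  by apply: (mulIf dG).
have nH : nrm (\det H) != 0 by rewrite /nrm sqrf_eq0 normr_eq0.
have nd : nrm d = nrm (\det H).
  have [q1 q1R E1] := dmax (\det H) (inR_det HR) minH.
  have [q2 q2R E2] := minor_mul dmin V1R.
  have E3 : \det H * (q1 * q2) = \det H by rewrite mulrA -E1 -E2.
  have q21 : q2 * q1 = 1 by apply: (mulfI dH); rewrite mulr1 [q2 * q1]mulrC E3.
  rewrite E1 nrmM (unit_nrm q1R q2R); first by rewrite mulr1.
  by rewrite mulrC.
rewrite -/(nrm d) nd key2 [nrm _ * _]mulrC mulfK //.
Qed.
Unset Implicit Arguments.

Theorem mainTheorem15 (r : Rkind) (n k : nat) (A0 : 'M[algC]_(n, k)) (lam : algC) :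
  (1 <= k)%N -> (k < n)%N -> mxR r A0 -> icube A0 lam ->
  (* (1) Lambda is a free R-module of rank n - k *)
  (exists B : 'M[algC]_(n, n - k), mxR r B /\ R_basis_of_Lambda r A0 B) /\
  (* (2) disc(Q) w.r.t. any R-basis of Lambda equals lam^k / |d_k(A0)|^2 *)
  (exists d, is_dk r A0 d) /\
  (forall (B : 'M[algC]_(n, n - k)) (d : algC),
     R_basis_of_Lambda r A0 B -> is_dk r A0 d ->
     \det (ctr B *m B) = lam ^+ k / `|d| ^+ 2).
Proof.
move=> _ kn.
have En : n = (k + (n - k))%N by rewrite subnKC // ltnW.
move: (n - k)%N En => m En.
subst n => AR Hic.
exact: core AR Hic.
Qed.
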